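(* Reduction Rule 1 is safe: if \((G',k')\) is obtained from an instance \((G,k)\) of Vertex Cover by applying Reduction Rule 1, then \(k'+MM(G')-2LP(G')\leq k+MM(G)-2LP(G)\).
   Context: All graphs are finite, undirected and simple. An instance of Vertex Cover is a pair \((G,k)\), \(k\in\mathbb{N}\). \(MM(G)\) is the size of a maximum matching. \(LPVC(G)\) is the LP: minimize \(\sum_v x_v\) subject to \(x_u+x_v\ge1\) for each edge \(\{u,v\}\) and \(0\le x_v\le1\); \(LP(G)\) is its optimum value. For a half-integral solution \(x\) (values in \(\{0,\frac12,1\}\)), \(V_i^x=\{v: x_v=i\}\). Reduction Rule 1 (applied when the all-\(\frac12\) assignment is not the unique optimum of \(LPVC(G)\)): compute an optimal half-integral solution \(x\) to \(LPVC(G)\) such that the all-\(\frac12\) assignment is the unique optimum solution to \(LPVC(G[V_{1/2}^x])\), and set \(G'=G[V_{1/2}^x]\), \(k'=k-|V_1^x|\). *)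

(* Defs.v *)
From HB Require Import structures.
From mathcomp Require Import all_boot all_order all_algebra.
Set Implicit Arguments. Unset Strict Implicit. Unset Printing Implicit Defensive.
Import Order.TTheory GRing.Theory Num.Theory.
Local Open Scope ring_scope.

(* A graph is given by a vertex set V : {set T} and an adjacency relation
   e : rel T (assumed symmetric and irreflexive); its edges are the pairs
   {u,v} with u, v in V and e u v.  The induced subgraph G[S] (S \subset V)
   is the graph (S, e). *)

Section Graphs.
Variable T : finType.

Definition is_edge (V : {set T}) (e : rel T) (u v : T) : bool :=
  [&& u \in V, v \in V & e u v].

Definition is_matching (V : {set T}) (e : rel T) (M : {set {set T}}) : bool :=
  [forall f in M, exists u, exists v, (is_edge V e u v) && (f == [set u; v])]
  && [forall f in M, forall g in M, (f != g) ==> [disjoint f & g]].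

Definition MM (V : {set T}) (e : rel T) : nat :=
  \max_(M : {set {set T}} | is_matching V e M) #|M|.

Variable R : realFieldType.

Definition lp_feasible (V : {set T}) (e : rel T) (x : T -> R) : Prop :=
  (forall u v, is_edge V e u v -> 1 <= x u + x v) /\
  (forall v, v \in V -> 0 <= x v <= 1).

Definition lp_obj (V : {set T}) (x : T -> R) : R := \sum_(v in V) x v.

Definition lp_optimal (V : {set T}) (e : rel T) (x : T -> R) : Prop :=
  lp_feasible V e x /\
  forall y, lp_feasible V e y -> lp_obj V x <= lp_obj V y.

Definition is_LP_value (V : {set T}) (e : rel T) (r : R) : Prop :=
  (exists x, lp_feasible V e x /\ lp_obj V x = r) /\
  forall y, lp_feasible V e y -> r <= lp_obj V y.

Definition half_integral (V : {set T}) (x : T -> R) : Prop :=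
  forall v, v \in V -> x v = 0 \/ x v = 2^-1 \/ x v = 1.

Definition Vi (V : {set T}) (x : T -> R) (i : R) : {set T} :=
  [set v in V | x v == i].

Definition all_half : T -> R := fun _ => 2^-1.

Definition half_unique_opt (V : {set T}) (e : rel T) : Prop :=
  lp_optimal V e all_half /\
  forall y, lp_optimal V e y -> forall v, v \in V -> y v = 2^-1.

End Graphs.

Arguments half_unique_opt {T} R V e.
Arguments all_half {T R}.

(* Main.v *)
Require Import Defs.
From mathcomp Require Import all_boot all_order all_algebra.
From mathcomp Require Import zify lra.
Set Implicit Arguments. Unset Strict Implicit. Unset Printing Implicit Defensive.
Import Order.TTheory GRing.Theory Num.Theory.

Section Hall.
Variables (T : finType) (r : rel T).
Definition NB (B S : {set T}) : {set T} := [set b in B | [exists a in S, r a b]].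

Lemma NBU (B S1 S2 : {set T}) : NB B (S1 :|: S2) = NB B S1 :|: NB B S2.
Proof.
apply/setP=> b; rewrite !inE -andb_orr; congr (_ && _).
apply/idP/idP.
- case/existsP=> a /andP[]; rewrite inE => /orP[] Ha Hr; apply/orP; [left|right]; apply/existsP; exists a; by rewrite Ha.
- by case/orP=> /existsP[a /andP[Ha Hr]]; apply/existsP; exists a; rewrite inE Ha ?orbT.
Qed.

Lemma NBS (B S1 S2 : {set T}) : S1 \subset S2 -> NB B S1 \subset NB B S2.
Proof.
move=> sS; apply/subsetP=> b; rewrite !inE => /andP[-> /existsP[a /andP[Ha Hr]]].
by apply/existsP; exists a; rewrite Hr (subsetP sS).
Qed.

Lemma hall n : forall A B : {set T}, #|A| <= n ->
  (forall S : {set T}, S \subset A -> #|S| <= #|NB B S|) ->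
  exists f : T -> T, {in A &, injective f} /\
    forall a, a \in A -> (f a \in B) && r a (f a).
Proof.
elim: n => [|n IH] A B.
  rewrite leqn0 => /eqP/cards0_eq -> _; exists id; split; first by move=> ?? /[!inE].
  by move=> a; rewrite inE.
move=> cA hA.
case: (boolP [exists S : {set T}, [&& S \subset A, S != set0, S != A & #|NB B S| <= #|S|]]).
- case/existsP=> S /and4P[sSA nS0 nSA tS].
  have pSA : S \proper A by rewrite properEneq nSA.
  have [f1 [i1 h1]] : exists f : T -> T, {in S &, injective f} /\
    forall a, a \in S -> (f a \in B) && r a (f a).
    apply: IH; first by have := proper_card pSA; lia.
    by move=> U sU; apply: hA; apply: subset_trans sU sSA.
  set B' := B :\: NB B S.
  have [f2 [i2 h2]] : exists f : T -> T, {in A :\: S &, injective f} /\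
    forall a, a \in A :\: S -> (f a \in B') && r a (f a).
    apply: IH.
      have : #|S| > 0 by rewrite card_gt0.
      have := cardsD A S; have : #|A :&: S| = #|S| by rewrite (setIidPr (proper_sub pSA)).
      lia.
    move=> U sU.
    have dUS : [disjoint U & S].
      by rewrite -setI_eq0; apply/eqP/setP=> t; rewrite !inE; apply/andP=> -[/(subsetP sU)]; rewrite !inE => /andP[/negPf->].
    have h := hA (U :|: S).
    have : U :|: S \subset A by rewrite subUset sSA (subset_trans sU) // subsetDl.
    move=> /h; rewrite NBU.
    have e1 : #|U :|: S| = #|U| + #|S|.
      by rewrite cardsU; move: dUS; rewrite -setI_eq0 => /eqP ->; rewrite cards0 subn0.
    have e2 : NB B U :|: NB B S \subset NB B' U :|: NB B S.
      apply/subsetP=> b; rewrite in_setU => /orP[Hb|Hb]; last by rewrite in_setU Hb orbT.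
      case: (boolP (b \in NB B S)) => [Hs|nb]; first by rewrite in_setU Hs orbT.
      move: Hb nb; rewrite !inE => /andP[-> ->] /negPf -> //.
    have := subset_leq_card e2; have := (leq_card_setU (NB B' U) (NB B S)).1.
    rewrite e1 => ???; lia.
  exists (fun t => if t \in S then f1 t else f2 t); split.
    move=> a a' Ha Ha'.
    case: (boolP (a \in S)) => aS; case: (boolP (a' \in S)) => a'S.
    - exact: i1.
    - have Hd : a' \in A :\: S by rewrite inE a'S Ha'.
      have : f2 a' \in B' by case/andP: (h2 a' Hd).
      move=> + E; rewrite -E !inE => /andP[/negP nb _]; exfalso; apply: nb.
      case/andP: (h1 a aS) => fB fr; rewrite fB /=; apply/existsP; exists a; by rewrite aS.
    - have Hd : a \in A :\: S by rewrite inE aS Ha.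
      have : f2 a \in B' by case/andP: (h2 a Hd).
      move=> + E; rewrite E !inE => /andP[/negP nb _]; exfalso; apply: nb.
      case/andP: (h1 a' a'S) => fB fr; rewrite fB /=; apply/existsP; exists a'; by rewrite a'S.
    - by apply: i2; rewrite inE ?aS ?a'S.
  move=> a Ha; case: (boolP (a \in S)) => aS; first exact: h1.
  have Hd : a \in A :\: S by rewrite inE aS Ha.
  have := h2 a Hd; rewrite inE => /andP[/andP[_ ->] ->] //.
move=> nt.
have strict : forall U : {set T}, U \subset A -> U != set0 -> U != A -> #|U| < #|NB B U|.
  move=> U sU n0 nA; rewrite ltnNge; apply/negP=> le.
  by move/negP: nt; apply; apply/existsP; exists U; rewrite sU n0 nA le.
case: (set_0Vmem A) => [->|[a Ha]].
  by exists id; split; [move=> ?? /[!inE] | move=> ? /[!inE]].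
have : 0 < #|NB B [set a]|.
  by apply: leq_trans (hA [set a] _); rewrite ?cards1 // sub1set.
case/card_gt0P=> b; rewrite inE => /andP[bB /existsP[a' /andP[]]]; rewrite inE => /eqP -> rab.
have [f2 [i2 h2]] : exists f : T -> T, {in A :\ a &, injective f} /\
    forall t, t \in A :\ a -> (f t \in B :\ b) && r t (f t).
  apply: IH.
    have := cardsD1 a A; rewrite Ha; lia.
  move=> U sU.
  case: (set_0Vmem U) => [->|[u Hu]]; first by rewrite cards0.
  have nA : U != A.
    by apply/eqP=> E; move: sU; rewrite E => /subsetP/(_ a Ha); rewrite !inE eqxx.
  have n0 : U != set0 by apply/set0Pn; exists u.
  have sUA : U \subset A by apply: subset_trans sU (subsetDl _ _).
  have := strict U sUA n0 nA.
  have e : NB B U \subset b |: NB (B :\ b) U.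
    apply/subsetP=> c; rewrite !inE => /andP[-> ->]; rewrite !andbT.
    by case: (c == b).
  have := subset_leq_card e; have := cardsU1 b (NB (B :\ b) U).
  move=> ???; lia.
exists (fun t => if t == a then b else f2 t); split.
  move=> t t' Ht Ht'.
  case: (eqVneq t a) => ta; case: (eqVneq t' a) => t'a.
  - by rewrite ta t'a.
  - have Hd : t' \in A :\ a by rewrite !inE t'a Ht'.
    move=> E; move: (h2 t' Hd); rewrite -E !inE eqxx; done.
  - have Hd : t \in A :\ a by rewrite !inE ta Ht.
    move=> E; move: (h2 t Hd); rewrite E !inE eqxx; done.
  - by apply: i2; rewrite !inE ?ta ?t'a.
move=> t Ht; case: (eqVneq t a) => [->|ta]; first by rewrite bB.
have Hd : t \in A :\ a by rewrite !inE ta Ht.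
by case/andP: (h2 t Hd); rewrite !inE => /andP[_ ->] ->.
Qed.
End Hall.

Lemma disjP' (T : finType) (g h : {set T}) :
  (forall z, z \in g -> z \in h -> False) -> [disjoint g & h].
Proof. by move=> H; apply/pred0P=> z /=; apply/negP=> /andP[/H]. Qed.

Lemma MM_attained (T : finType) (V : {set T}) (e : rel T) :
  exists2 M, is_matching V e M & MM V e = #|M|.
Proof.
have h0 : (0 < #|[pred M : {set {set T}} | is_matching V e M]|)%N.
  apply/card_gt0P; exists set0; rewrite inE /is_matching.
  by apply/andP; split; apply/forallP=> f; rewrite in_set0.
have [M0 HM0 E] := @eq_bigmax_cond _ [pred M : {set {set T}} | is_matching V e M] (fun M => #|M|) h0.
exists M0; first by move: HM0; rewrite inE.
by rewrite /MM -E; apply: eq_bigl => M; rewrite inE.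
Qed.

Lemma MM_ge (T : finType) (V : {set T}) (e : rel T) M :
  is_matching V e M -> (#|M| <= MM V e)%N.
Proof. by move=> h; rewrite /MM; apply: (@leq_bigmax_cond _ (fun M => is_matching V e M) (fun M : {set {set T}} => #|M|) M h). Qed.

Local Open Scope ring_scope.
Lemma sum_ind (R : realFieldType) (T : finType) (A : {set T}) :
  \sum_(i in [set: T]) ((i \in A)%:R : R) = #|A|%:R.
Proof.
rewrite (eq_bigr (fun i => if i \in A then 1 else 0)); last by move=> i _; case: (i \in A).
rewrite -big_mkcondr /= sumr_const; congr (_ *+ _); apply: eq_card => i. by rewrite unfold_in in_setT.
Qed.

Lemma hall_cond (R : realFieldType) (T : finType) (e : rel T) (e_sym : symmetric e) (x : T -> R) :
  half_integral [set: T] x -> lp_optimal [set: T] e x ->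
  forall S : {set T}, S \subset Vi [set: T] x 1 -> (#|S| <= #|NB e (Vi [set: T] x 0) S|)%N.
Proof.
move=> hint [[xf xb] xopt] S sS.
set N := NB e (Vi [set: T] x 0) S.
have hS : forall w, w \in S -> x w = 1.
  by move=> w /(subsetP sS); rewrite inE => /andP[_ /eqP].
have hN : forall w, w \in N -> x w = 0.
  by move=> w; rewrite !inE /= => /andP[/eqP].
have hx : forall w, x w = 0 \/ x w = 2^-1 \/ x w = 1 by move=> w; apply: hint; rewrite inE.
have F1 : forall u v, u \in S -> e u v -> x v = 0 -> v \in N.
  move=> u v uS euv xv; rewrite !inE xv eqxx /=; apply/existsP; exists u; by rewrite uS.
have dSN : forall w, w \in S -> w \in N -> False.
  by move=> w /hS h1 /hN; rewrite h1 => /eqP; rewrite oner_eq0.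
pose y := fun w => if w \in S then 2^-1 else if w \in N then 2^-1 else x w : R.
have yf : lp_feasible [set: T] e y.
  split.
    move=> u v; rewrite /is_edge => /and3P[_ _ euv].
    have xuv : 1 <= x u + x v by apply: xf; rewrite /is_edge !inE euv.
    have evu : e v u by rewrite e_sym.
    rewrite /y.
    case: ifP => uS; [|case: ifP => uN]; case: ifP => vS; try case: ifP => vN.
    all: try (have ? := hN u uN); try (have ? := hN v vN); try lra.
    all: try by have [xv|[xv|xv]] := hx v; [move: (F1 _ _ uS euv xv); rewrite vN | lra | lra].
    all: try by have [xu|[xu|xu]] := hx u; [move: (F1 _ _ vS evu xu); rewrite uN | lra | lra].
  move=> w _; rewrite /y; case: ifP => _; [|case: ifP => _]; try lra.
  by apply: xb; rewrite inE.
have := xopt y yf; rewrite /lp_obj.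
have -> : \sum_(v in [set: T]) y v = \sum_(v in [set: T]) x v + (#|N|%:R - #|S|%:R) / 2.
  have -> : \sum_(v in [set: T]) y v = \sum_(v in [set: T]) (x v + ((v \in N)%:R - (v \in S)%:R) / 2).
    apply: eq_bigr => w _; rewrite /y.
    case: ifP => wS; [|case: ifP => wN]; rewrite ?wS ?wN /=.
    - have -> : (w \in N) = false by apply/negP=> /(dSN w wS).
      rewrite hS // /= ?mulr0n ?mulr1n; lra.
    - rewrite hN // /= ?mulr0n ?mulr1n; lra.
    - rewrite /= ?mulr0n ?mulr1n; lra.
  rewrite big_split /=; congr (_ + _).
  rewrite -mulr_suml sumrB; congr ((_ - _) / 2).
  - exact: sum_ind.
  - exact: sum_ind.
move=> H; have hSn : (#|S|%:R : R) <= #|N|%:R by lra.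
by rewrite ler_nat in hSn.
Qed.

Theorem lemma7 (R : realFieldType) (T : finType) (e : rel T)
  (e_sym : symmetric e) (e_irr : irreflexive e) (k : nat) (x : T -> R) :
  ~ half_unique_opt R [set: T] e ->
  half_integral [set: T] x ->
  lp_optimal [set: T] e x ->
  half_unique_opt R (Vi [set: T] x 2^-1) e ->
  forall (k' : int) (lpG lpG' : R),
  k' = (k%:Z - #|Vi [set: T] x 1|%:Z)%R ->
  is_LP_value [set: T] e lpG ->
  is_LP_value (Vi [set: T] x 2^-1) e lpG' ->
  (k' + (MM (Vi [set: T] x 2^-1) e)%:Z)%:~R - 2 * lpG'
    <= (k%:Z + (MM [set: T] e)%:Z)%:~R - 2 * lpG.
Proof.
move=> _ hint xopt hhalf k' lpG lpG' -> [[z [zf zo]] lpGle] [[z' [z'f z'o]] lpG'le].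
set V1 := Vi [set: T] x 1; set Vh := Vi [set: T] x 2^-1; set V0 := Vi [set: T] x 0.
have [xfeas xo] := xopt.
have elpG : lpG = lp_obj [set: T] x.
  have := lpGle x xfeas; have := xo z zf; rewrite zo; lra.
have [[hfeas ho] _] := hhalf.
have elpG' : lpG' = lp_obj Vh all_half.
  have := lpG'le all_half hfeas; have := ho z' z'f; rewrite z'o; lra.
have hx : forall w, x w = 0 \/ x w = 2^-1 \/ x w = 1 by move=> w; apply: hint; rewrite inE.
have n01 : ((0 : R) == 1) = false by apply/eqP; lra.
have n0h : ((0 : R) == 2^-1) = false by apply/eqP; lra.
have nh1 : ((2^-1 : R) == 1) = false by apply/eqP; lra.
have n1h : ((1 : R) == 2^-1) = false by apply/eqP; lra.
have objx : lp_obj [set: T] x = #|V1|%:R + #|Vh|%:R / 2.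
  rewrite /lp_obj -!(sum_ind R) mulr_suml -big_split /=.
  apply: eq_bigr => w _; rewrite !inE /=.
  by case: (hx w) => [->|[->|->]]; rewrite ?eqxx ?n01 ?n0h ?nh1 ?n1h /= ?mulr0n ?mulr1n; lra.
have objh : lp_obj Vh (all_half : T -> R) = #|Vh|%:R / 2.
  by rewrite /lp_obj (eq_bigr (fun _ => 2^-1 : R)) // sumr_const [RHS]mulr_natl.
have [f [fi fh]] := hall (r := e) (n := #|V1|) (A := V1) (B := V0) (leqnn _)
   (hall_cond e_sym hint xopt).
have xV1 : forall a, a \in V1 -> x a = 1 by move=> a; rewrite !inE /= => /eqP.
have xV0 : forall a, a \in V1 -> x (f a) = 0.
  by move=> a /fh /andP[]; rewrite !inE /= => /eqP.
have efa : forall a, a \in V1 -> e a (f a) by move=> a /fh /andP[].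
have [M' M'm eMM'] := MM_attained Vh e.
have M'm' := M'm; case/andP: M'm' => /forallP F1 /forallP F2.
have M'e : forall g, g \in M' -> exists u, exists v, [/\ x u = 2^-1, x v = 2^-1, e u v & g = [set u; v]].
  move=> g gM; have := F1 g; rewrite gM /= => /existsP[u /existsP[v /andP[]]].
  rewrite /is_edge !inE /= => /and3P[/eqP xu /eqP xv euv] /eqP ->.
  by exists u, v.
set M1 := [set [set a; f a] | a in V1].
have M1e : forall g, g \in M1 -> exists2 a, a \in V1 & g = [set a; f a].
  by move=> g /imsetP[a Ha ->]; exists a.
have inj1 : {in V1 &, injective (fun a => [set a; f a])}.
  move=> a b Ha Hb /= E.
  have : a \in [set b; f b] by rewrite -E !inE eqxx.
  rewrite !inE => /orP[/eqP //|/eqP E2].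
  by exfalso; have := xV1 a Ha; have := xV0 b Hb; rewrite -E2; lra.
have cM1 : #|M1| = #|V1| by rewrite card_in_imset.
have dis : M1 :&: M' = set0.
  apply/setP=> g; rewrite !inE; apply/negP=> /andP[/M1e[a Ha ->] /M'e[u [v [xu xv _ E]]]].
  have : a \in [set u; v] by rewrite -E !inE eqxx.
  by rewrite !inE => /orP[]/eqP Ea; have := xV1 a Ha; rewrite Ea; lra.
have Mm : is_matching [set: T] e (M1 :|: M').
  apply/andP; split; apply/forallP=> g; apply/implyP; rewrite inE => /orP[gM|gM].
  - case/M1e: gM => a Ha ->; apply/existsP; exists a; apply/existsP; exists (f a).
    by rewrite /is_edge !in_setT efa ?eqxx.
  - case/M'e: gM => u [v [_ _ euv ->]]; apply/existsP; exists u; apply/existsP; exists v.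
    by rewrite /is_edge !in_setT euv eqxx.
  - case/M1e: gM => a Ha ->; apply/forallP=> h; apply/implyP; rewrite inE => /orP[hM|hM];
      apply/implyP=> ne; apply: disjP' => w.
    + case/M1e: hM ne => b Hb -> ne.
      rewrite !inE => /orP[]/eqP -> /orP[]/eqP E.
      * by move: ne; rewrite E eqxx.
      * by have := xV1 a Ha; have := xV0 b Hb; rewrite E; lra.
      * by have := xV0 a Ha; have := xV1 b Hb; rewrite E; lra.
      * by move: ne; rewrite (fi a b Ha Hb E) eqxx.
    + case/M'e: hM ne => u [v [xu xv _ ->]] _.
      rewrite !inE => /orP[]/eqP -> /orP[]/eqP E.
      * by have := xV1 a Ha; rewrite E; lra.
      * by have := xV1 a Ha; rewrite E; lra.
      * by have := xV0 a Ha; rewrite E; lra.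
      * by have := xV0 a Ha; rewrite E; lra.
  - case/M'e: (gM) => u [v [xu xv _ Eg]].
    apply/forallP=> h; apply/implyP; rewrite inE => /orP[hM|hM]; apply/implyP=> ne.
    + apply: disjP' => w; case/M1e: hM ne => a Ha -> _; rewrite Eg.
      rewrite !inE => /orP[]/eqP -> /orP[]/eqP E.
      * by have := xV1 a Ha; rewrite -E; lra.
      * by have := xV0 a Ha; rewrite -E; lra.
      * by have := xV1 a Ha; rewrite -E; lra.
      * by have := xV0 a Ha; rewrite -E; lra.
    + by have := F2 g; rewrite gM /= => /forallP/(_ h); rewrite hM ne.
have key : (#|V1| + MM Vh e <= MM [set: T] e)%N.
  have := MM_ge Mm; rewrite cardsU dis cards0 subn0 cM1 eMM'; done.
have keyR : (#|V1|%:R + (MM Vh e)%:R : R) <= (MM [set: T] e)%:R.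
  by rewrite -natrD ler_nat.
rewrite elpG elpG' objx objh !intrD intrN !pmulrn.
lra.
Qed.
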